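(* Let $(H,\alpha_H)$ be a Hom-bialgebra, let $m\in\mathbb Z$, and for Hom-Long dimodules $(U,\alpha_U),(V,\alpha_V)$ define $\xi_{U,V}:U\otimes V\to U\otimes V$, $u\otimes v\mapsto\alpha_U^{-1}(u)\cdot\alpha_H^m(v_{(1)})\otimes\alpha_V^{-1}(v_{(0)})$. Then for all Hom-Long dimodules $U,V,W$, $$(\xi_{U,V}\otimes\mathrm{id}_W)\circ a^{-1}_{U,V,W}\circ(\mathrm{id}_U\otimes\xi_{V,W})\circ a_{U,V,W}=a^{-1}_{U,V,W}\circ(\mathrm{id}_U\otimes\xi_{V,W})\circ a_{U,V,W}\circ(\xi_{U,V}\otimes\mathrm{id}_W)$$ as maps $(U\otimes V)\otimes W\to(U\otimes V)\otimes W$.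
   Context: $\Bbbk$ field of characteristic $0$; vector spaces finite-dimensional; structure maps $\alpha$ bijective; $i,j$ fixed integers; $a_{X,Y,Z}((x\otimes y)\otimes z)=\alpha_X^{i+1}(x)\otimes(y\otimes\alpha_Z^{-j-1}(z))$ is the associativity constraint of $\overline{\mathcal H}^{i,j}(Vec_\Bbbk)$ (objects $(X,\alpha_X)$, $\alpha_X$ a linear automorphism). Hom-bialgebra: Hom-algebra ($\alpha(a)(bc)=(ab)\alpha(c)$, $\alpha(1)=1$, $1a=a1=\alpha(a)$), Hom-coalgebra ($\varepsilon\alpha=\varepsilon$, $\alpha(c_1)\otimes\Delta(c_2)=\Delta(c_1)\otimes\alpha(c_2)$, $\varepsilon(c_1)c_2=c_1\varepsilon(c_2)=\alpha(c)$), $\Delta,\varepsilon$ unit-preserving Hom-algebra maps. A Hom-Long dimodule is $(U,\alpha_U)$, a right $H$-Hom-module ($(u\cdot a)\cdot\alpha_H(b)=\alpha_U(u)\cdot(ab)$, $u\cdot1_H=\alpha_U(u)$) and right $H$-Hom-comodule ($\rho(u)=u_{(0)}\otimes u_{(1)}$, $\alpha_U(u_{(0)})\otimes\Delta(u_{(1)})=\rho(u_{(0)})\otimes\alpha_H(u_{(1)})$, $\varepsilon(u_{(1)})u_{(0)}=\alpha_U(u)$), structure maps commuting with the $\alpha$'s, with $\rho(u\cdot h)=u_{(0)}\cdot\alpha_H(h)\otimes\alpha_H(u_{(1)})$. *)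

(* Defs.v *)
(* Finite-dimensional K-vector spaces are modelled by
   coordinates: a space of dimension n is 'rV[K]_n, a linear map
   K^n -> K^p is a matrix A : 'M_(n, p) acting on the RIGHT (v |-> v *m A),
   so the composite "g o f" is the matrix  F *m G.
   The tensor product of K^n and K^m is K^(n*m) with the Kronecker product
   (tensmx, "*t", from mathcomp-real-closed's mxtens), index (a,b) |-> a*m+b. *)
From HB Require Import structures.
From mathcomp Require Import all_boot all_order all_algebra.
From mathcomp Require Export mxtens.
Set Implicit Arguments. Unset Strict Implicit. Unset Printing Implicit Defensive.
Import GRing.Theory Num.Theory.
Local Open Scope ring_scope.

Section HomDefs.
Variable K : fieldType.

Definition mxpowz {n} (A : 'M[K]_n) (k : int) : 'M[K]_n :=
  match k with
  | Posz p => iter p (mulmx A) 1%:M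
  | Negz p => iter p.+1 (mulmx (invmx A)) 1%:M
  end.

Definition assocmx n m p : 'M[K]_(n * m * p, n * (m * p)) :=
  castmx (erefl _, esym (mulnA n m p)) (1%:M : 'M[K]_(n * m * p)).
Definition assocmxV n m p : 'M[K]_(n * (m * p), n * m * p) :=
  castmx (esym (mulnA n m p), erefl _) (1%:M : 'M[K]_(n * m * p)).

(* middle interchange (a (x) b) (x) (c (x) d) |-> (a (x) c) (x) (b (x) d) *)
Definition midmx n m p q : 'M[K]_(n * m * (p * q), n * p * (m * q)) :=
  \matrix_(r, c)
    (let x := (mxtens_unindex r).1 in let y := (mxtens_unindex r).2 in
     let a := (mxtens_unindex x).1 in let b := (mxtens_unindex x).2 in
     let c' := (mxtens_unindex y).1 in let d := (mxtens_unindex y).2 in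
     (c == mxtens_index (mxtens_index (a, c'), mxtens_index (b, d)))%:R).

(* (u (x) x) (x) y |-> (u (x) y) (x) x *)
Definition swap23mx n p q : 'M[K]_(n * p * q, n * q * p) :=
  \matrix_(r, c)
    (let x := (mxtens_unindex r).1 in let y := (mxtens_unindex r).2 in
     let u := (mxtens_unindex x).1 in let z := (mxtens_unindex x).2 in
     (c == mxtens_index (mxtens_index (u, y), z))%:R).

(* u (x) (v (x) x) |-> (u (x) x) (x) v *)
Definition perm132mx n m p : 'M[K]_(n * (m * p), n * p * m) :=
  \matrix_(r, c)
    (let u := (mxtens_unindex r).1 in let y := (mxtens_unindex r).2 in
     let v := (mxtens_unindex y).1 in let x := (mxtens_unindex y).2 in
     (c == mxtens_index (mxtens_index (u, x), v))%:R).

Record hom_bialg_data := HomBialgData {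
  hdim : nat;
  halpha : 'M[K]_hdim;
  hmul : 'M[K]_(hdim * hdim, hdim);
  hunit : 'rV[K]_hdim;
  hcomul : 'M[K]_(hdim, hdim * hdim);
  hcounit : 'cV[K]_hdim }.

Definition is_hom_bialgebra (H : hom_bialg_data) : Prop :=
  let h := hdim H in let al := halpha H in let mu := hmul H in
  let e := hunit H in let D := hcomul H in let eps := hcounit H in
  [/\
      al \in unitmx,
    [/\
      mu *m al = (al *t al) *m mu,
      e *m al = e,
      (* Hom-associativity  alpha(a)(bc) = (ab)alpha(c) *)
      assocmx h h h *m (al *t mu) *m mu = (mu *t al) *m mu &
      (* 1a = a1 = alpha(a) *)
      (forall a : 'rV[K]_h, (e *t a) *m mu = a *m al /\ (a *t e) *m mu = a *m al)] &
    [/\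
      al *m D = D *m (al *t al),
      al *m eps = eps,
      (* Hom-coassociativity alpha(c1) (x) Delta(c2) = Delta(c1) (x) alpha(c2) *)
      D *m (al *t D) = D *m (D *t al) *m assocmx h h h,
      (* eps(c1)c2 = c1 eps(c2) = alpha(c) *)
      castmx (erefl _, mul1n h) (D *m (eps *t 1%:M)) = al /\
      castmx (erefl _, muln1 h) (D *m (1%:M *t eps)) = al &
      [/\ mu *m D = (D *t D) *m midmx h h h h *m (mu *t mu),
          e *m D = e *t e,
          mu *m eps = eps *t eps &
          e *m eps = 1%:M]]].

Record hom_dimod_data (H : hom_bialg_data) := HomDimodData {
  udim : nat;
  ualpha : 'M[K]_udim;
  uact : 'M[K]_(udim * hdim H, udim);
  ucoact : 'M[K]_(udim, udim * hdim H) }.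

Definition is_hom_long_dimodule (H : hom_bialg_data) (U : hom_dimod_data H) : Prop :=
  let h := hdim H in let al := halpha H in let mu := hmul H in
  let e := hunit H in let D := hcomul H in let eps := hcounit H in
  let n := udim U in let aU := ualpha U in let act := uact U in
  let rho := ucoact U in
  [/\
      aU \in unitmx,
    [/\
      (aU *t al) *m act = act *m aU,
      aU *m rho = rho *m (aU *t al),
      (* right H-Hom-module: (u.a).alpha(b) = alpha(u).(ab), u.1 = alpha(u) *)
      (act *t al) *m act = assocmx n h h *m (aU *t mu) *m act &
      (forall u : 'rV[K]_n, (u *t e) *m act = u *m aU)] &
    [/\
      rho *m (aU *t D) = rho *m (rho *t al) *m assocmx n h h,
      castmx (erefl _, muln1 n) (rho *m (1%:M *t eps)) = aU &
      (* Long compatibility: rho(u.h) = u_(0).alpha(h) (x) alpha(u_(1)) *)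
      act *m rho = (rho *t al) *m swap23mx n h h *m (act *t al)]].

(* the associativity constraint of H^{i,j}(Vec_K) and its inverse *)
Definition assoc_ij (i j : int) n m p (aX : 'M[K]_n) (aY : 'M[K]_m) (aZ : 'M[K]_p)
  : 'M[K]_(n * m * p, n * (m * p)) :=
  ((mxpowz aX (i + 1) *t (1%:M : 'M[K]_m)) *t mxpowz aZ (- j - 1)) *m assocmx n m p.
Definition assoc_ijV (i j : int) n m p (aX : 'M[K]_n) (aY : 'M[K]_m) (aZ : 'M[K]_p)
  : 'M[K]_(n * (m * p), n * m * p) :=
  assocmxV n m p *m ((mxpowz aX (- i - 1) *t (1%:M : 'M[K]_m)) *t mxpowz aZ (j + 1)).

Definition xi (H : hom_bialg_data) (m : int) (U V : hom_dimod_data H)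
  : 'M[K]_(udim U * udim V, udim U * udim V) :=
  ((1%:M : 'M[K]_(udim U)) *t ucoact V) *m perm132mx (udim U) (udim V) (hdim H)
  *m (((mxpowz (ualpha U) (-1) *t mxpowz (halpha H) m) *m uact U)
        *t mxpowz (ualpha V) (-1)).

End HomDefs.

(* Main.v *)
Require Import Defs.
From HB Require Import structures.
From mathcomp Require Import all_boot all_order all_algebra.
From mathcomp Require Import mxtens zify.
Set Implicit Arguments. Unset Strict Implicit. Unset Printing Implicit Defensive.
Import GRing.Theory Num.Theory.
Local Open Scope ring_scope.


Section Pow.
Variable K : fieldType.

Lemma iter_comm n (a : 'M[K]_n) p : iter p (mulmx a) 1%:M *m a = a *m iter p (mulmx a) 1%:M.
Proof.
elim: p => [|p IH] /=; first by rewrite mul1mx mulmx1.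
by rewrite -mulmxA IH.
Qed.

Lemma powS n (a : 'M[K]_n) (k : int) : a \in unitmx ->
  mxpowz a (k + 1) = mxpowz a k *m a.
Proof.
move=> ua; case: k => [p|p].
  have -> : (Posz p + 1 = Posz p.+1)%R by lia.
  by rewrite /= iter_comm.
case: p => [|p].
  have -> : (Negz 0 + 1 = 0)%R by lia.
  by rewrite /= mulmx1 mulVmx.
have -> : (Negz p.+1 + 1 = Negz p)%R by lia.
rewrite [in RHS]/= -[in RHS](iter_comm (invmx a) p.+1) -mulmxA mulVmx // mulmx1.
by [].
Qed.

Lemma powN n (a : 'M[K]_n) (k : nat) : a \in unitmx ->
  mxpowz a (- (k.+1)%:Z) = mxpowz a (- k%:Z) *m invmx a.
Proof.
move=> ua; have := powS (- (k.+1)%:Z) ua.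
have -> : (- (k.+1)%:Z + 1 = - k%:Z)%R by lia.
by move=> ->; rewrite mulmxK.
Qed.

Lemma pow0 n (a : 'M[K]_n) : mxpowz a 0 = 1%:M.
Proof. by []. Qed.

Lemma pow1 n (a : 'M[K]_n) : mxpowz a 1 = a.
Proof. by rewrite /= mulmx1. Qed.

Lemma powD n (a : 'M[K]_n) (k l : int) : a \in unitmx ->
  mxpowz a k *m mxpowz a l = mxpowz a (k + l).
Proof.
move=> ua; elim/int_rec: l k => [|l IH|l IH] k.
- by rewrite pow0 mulmx1 addr0.
- have -> : (Posz l.+1 = Posz l + 1)%R by lia.
  by rewrite powS // mulmxA IH -powS // addrA.
- rewrite powN // mulmxA IH.
  have -> : (k + - (l.+1)%:Z = (k + - l%:Z) - 1)%R by lia.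
  have := powS (k + - l%:Z - 1) ua; rewrite subrK => ->.
  by rewrite mulmxK.
Qed.

End Pow.


Section Perm.
Variable K : fieldType.

Notation idx := mxtens_index.
Notation unidx := mxtens_unindex.

Lemma idx_eq m n (a a' : 'I_m) (b b' : 'I_n) :
  (idx (a, b) == idx (a', b')) = (a == a') && (b == b').
Proof. by rewrite (can_eq (@mxtens_indexK m n)) xpair_eqE. Qed.

Lemma tens11 m n : (1%:M : 'M[K]_m) *t (1%:M : 'M[K]_n) = 1%:M.
Proof.
apply/matrixP=> r c; case: (mxtens_indexP r) => a b; case: (mxtens_indexP c) => a' b'.
by rewrite tensmxE !mxE idx_eq -natrM mulnb.
Qed.

Definition pmx N M (f : 'I_N -> 'I_M) : 'M[K]_(N, M) := \matrix_(r, c) (c == f r)%:R.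

Lemma pmx_mull N M P (f : 'I_N -> 'I_M) (A : 'M[K]_(M, P)) r c :
  (pmx f *m A) r c = A (f r) c.
Proof.
rewrite mxE (bigD1 (f r)) //= mxE eqxx mul1r big1 ?addr0 // => s /negbTE.
by rewrite mxE eq_sym => ->; rewrite mul0r.
Qed.

Lemma pmx_mulr N M P (f : 'I_N -> 'I_M) (g : 'I_M -> 'I_N) (A : 'M[K]_(P, N)) r c :
  cancel f g -> cancel g f -> (A *m pmx f) r c = A r (g c).
Proof.
move=> fK gK.
rewrite mxE (bigD1 (g c)) //= mxE gK eqxx mulr1 big1 ?addr0 // => s /negbTE sn.
rewrite mxE; case: eqP => [E|]; last by rewrite mulr0.
by move: sn; rewrite E fK eqxx.
Qed.

Lemma pmx_comp N M P (f : 'I_N -> 'I_M) (g : 'I_M -> 'I_P) :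
  pmx f *m pmx g = pmx (fun r => g (f r)).
Proof. by apply/matrixP=> r c; rewrite pmx_mull !mxE. Qed.

Lemma pmx_ext N M (f g : 'I_N -> 'I_M) : f =1 g -> pmx f = pmx g.
Proof. by move=> e; apply/matrixP=> r c; rewrite !mxE e. Qed.

Lemma pmx_id N : pmx (fun r : 'I_N => r) = 1%:M.
Proof. by apply/matrixP=> r c; rewrite !mxE eq_sym. Qed.

Lemma tens1pmx m N M (f : 'I_N -> 'I_M) :
  (1%:M : 'M[K]_m) *t pmx f = pmx (fun r => idx ((unidx r).1, f (unidx r).2)).
Proof.
apply/matrixP=> r c; case: (mxtens_indexP r) => a b; case: (mxtens_indexP c) => a' b'.
by rewrite tensmxE !mxE !mxtens_indexK idx_eq -natrM mulnb eq_sym.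
Qed.

Lemma tenspmx1 m N M (f : 'I_N -> 'I_M) :
  pmx f *t (1%:M : 'M[K]_m) = pmx (fun r => idx (f (unidx r).1, (unidx r).2)).
Proof.
apply/matrixP=> r c; case: (mxtens_indexP r) => a b; case: (mxtens_indexP c) => a' b'.
by rewrite tensmxE !mxE !mxtens_indexK idx_eq -natrM mulnb /= [b == _]eq_sym.
Qed.

Lemma tenspmx N M N' M' (f : 'I_N -> 'I_M) (g : 'I_N' -> 'I_M') :
  pmx f *t pmx g = pmx (fun r => idx (f (unidx r).1, g (unidx r).2)).
Proof.
apply/matrixP=> r c; case: (mxtens_indexP r) => a b; case: (mxtens_indexP c) => a' b'.
by rewrite tensmxE !mxE !mxtens_indexK idx_eq -natrM mulnb.
Qed.

Definition fa n m p (r : 'I_(n * m * p)) : 'I_(n * (m * p)) :=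
  idx ((unidx (unidx r).1).1, idx ((unidx (unidx r).1).2, (unidx r).2)).
Definition faV n m p (r : 'I_(n * (m * p))) : 'I_(n * m * p) :=
  idx (idx ((unidx r).1, (unidx (unidx r).2).1), (unidx (unidx r).2).2).
Definition f132 n m p (r : 'I_(n * (m * p))) : 'I_(n * p * m) :=
  idx (idx ((unidx r).1, (unidx (unidx r).2).2), (unidx (unidx r).2).1).
Definition f132V n m p (r : 'I_(n * p * m)) : 'I_(n * (m * p)) :=
  idx ((unidx (unidx r).1).1, idx ((unidx r).2, (unidx (unidx r).1).2)).
Definition fsw n p q (r : 'I_(n * p * q)) : 'I_(n * q * p) :=
  idx (idx ((unidx (unidx r).1).1, (unidx r).2), (unidx (unidx r).1).2).
Definition fQ n p q h (r : 'I_(n * p * (q * h))) : 'I_(n * (p * h) * q) :=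
  idx (idx ((unidx (unidx r).1).1, idx ((unidx (unidx r).1).2, (unidx (unidx r).2).2)),
       (unidx (unidx r).2).1).
Definition fQV n p q h (r : 'I_(n * (p * h) * q)) : 'I_(n * p * (q * h)) :=
  idx (idx ((unidx (unidx r).1).1, (unidx (unidx (unidx r).1).2).1),
       idx ((unidx r).2, (unidx (unidx (unidx r).1).2).2)).

Definition Qmx n p q h := pmx (@fQ n p q h).

Ltac dec r := let a := fresh "a" in let b := fresh "b" in
  case: (mxtens_indexP r) => a b.

Lemma faK n m p : cancel (@fa n m p) (@faV n m p).
Proof. move=> r; dec r; dec a; by rewrite /fa /faV !mxtens_indexK. Qed.
Lemma faVK n m p : cancel (@faV n m p) (@fa n m p).
Proof. move=> r; dec r; dec b; by rewrite /fa /faV !mxtens_indexK. Qed.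
Lemma f132K n m p : cancel (@f132 n m p) (@f132V n m p).
Proof. move=> r; dec r; dec b; by rewrite /f132 /f132V !mxtens_indexK. Qed.
Lemma f132VK n m p : cancel (@f132V n m p) (@f132 n m p).
Proof. move=> r; dec r; dec a; by rewrite /f132 /f132V !mxtens_indexK. Qed.
Lemma fswK n p q : cancel (@fsw n p q) (@fsw n q p).
Proof. move=> r; dec r; dec a; by rewrite /fsw !mxtens_indexK. Qed.
Lemma fQK n p q h : cancel (@fQ n p q h) (@fQV n p q h).
Proof. move=> r; dec r; dec a; dec b; by rewrite /fQ /fQV !mxtens_indexK. Qed.
Lemma fQVK n p q h : cancel (@fQV n p q h) (@fQ n p q h).
Proof. move=> r; dec r; dec a; dec b0; by rewrite /fQ /fQV !mxtens_indexK. Qed.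

Lemma assocE n m p : assocmx K n m p = pmx (@fa n m p).
Proof.
apply/matrixP=> r c; dec r; dec a; rewrite castmxE !mxE /fa !mxtens_indexK.
rewrite -val_eqE /= eq_sym; congr ((_ == _)%:R).
by rewrite /mxtens_index /=; nia.
Qed.

Lemma assocVE n m p : assocmxV K n m p = pmx (@faV n m p).
Proof.
apply/matrixP=> r c; dec r; dec b; rewrite castmxE !mxE /faV !mxtens_indexK.
rewrite -val_eqE /= eq_sym; congr ((_ == _)%:R).
by rewrite /mxtens_index /=; nia.
Qed.

Lemma p132E n m p : perm132mx K n m p = pmx (@f132 n m p).
Proof. by apply/matrixP=> r c; rewrite !mxE. Qed.
Lemma swE n p q : swap23mx K n p q = pmx (@fsw n p q).
Proof. by apply/matrixP=> r c; rewrite !mxE. Qed.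

End Perm.


Section Nat.
Variable K : fieldType.
Notation idx := mxtens_index.

Lemma N1 n1 m1 p1 n2 m2 p2 (A : 'M[K]_(n1, n2)) (B : 'M[K]_(m1, m2)) (C : 'M[K]_(p1, p2)) :
  assocmx K n1 m1 p1 *m (A *t (B *t C)) = ((A *t B) *t C) *m assocmx K n2 m2 p2.
Proof.
rewrite !assocE; apply/matrixP=> r c.
rewrite pmx_mull (pmx_mulr _ _ _ (@faK _ _ _) (@faVK _ _ _)).
case: (mxtens_indexP r) => x r3; case: (mxtens_indexP x) => r1 r2.
case: (mxtens_indexP c) => c1 y; case: (mxtens_indexP y) => c2 c3.
by rewrite /fa /faV !mxtens_indexK /= !tensmxE mulrA.
Qed.

Lemma assocK n m p : assocmx K n m p *m assocmxV K n m p = 1%:M.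
Proof.
rewrite assocE assocVE pmx_comp -pmx_id; apply: pmx_ext => r; exact: faK.
Qed.

Lemma N2 n1 p1 q1 n2 p2 q2 (A : 'M[K]_(n1, n2)) (B : 'M[K]_(p1, p2)) (C : 'M[K]_(q1, q2)) :
  ((A *t B) *t C) *m swap23mx K n2 p2 q2 = swap23mx K n1 p1 q1 *m ((A *t C) *t B).
Proof.
rewrite !swE; apply/matrixP=> r c.
rewrite pmx_mull (pmx_mulr _ _ _ (@fswK _ _ _) (@fswK _ _ _)).
case: (mxtens_indexP r) => x r3; case: (mxtens_indexP x) => r1 r2.
case: (mxtens_indexP c) => y c3; case: (mxtens_indexP y) => c1 c2.
by rewrite /fsw !mxtens_indexK /= !tensmxE mulrAC.
Qed.

Lemma N3 n1 p1 q1 h1 n2 p2 q2 h2 (A : 'M[K]_(n1, n2)) (B : 'M[K]_(p1, p2))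
  (C : 'M[K]_(q1, q2)) (D : 'M[K]_(h1, h2)) :
  ((A *t B) *t (C *t D)) *m Qmx K n2 p2 q2 h2 = Qmx K n1 p1 q1 h1 *m ((A *t (B *t D)) *t C).
Proof.
rewrite /Qmx; apply/matrixP=> r c.
rewrite pmx_mull (pmx_mulr _ _ _ (@fQK _ _ _ _) (@fQVK _ _ _ _)).
case: (mxtens_indexP r) => x y; case: (mxtens_indexP x) => r1 r2; case: (mxtens_indexP y) => r3 r4.
case: (mxtens_indexP c) => x' c3; case: (mxtens_indexP x') => c1 y'; case: (mxtens_indexP y') => c2 c4.
rewrite /fQ /fQV !mxtens_indexK /= !tensmxE.
by rewrite !mulrA mulrAC.
Qed.

Lemma N4 n1 m1 p1 n2 m2 p2 (A : 'M[K]_(n1, n2)) (B : 'M[K]_(m1, m2)) (C : 'M[K]_(p1, p2)) :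
  (A *t (B *t C)) *m perm132mx K n2 m2 p2 = perm132mx K n1 m1 p1 *m ((A *t C) *t B).
Proof.
rewrite !p132E; apply/matrixP=> r c.
rewrite pmx_mull (pmx_mulr _ _ _ (@f132K _ _ _) (@f132VK _ _ _)).
case: (mxtens_indexP r) => r1 y; case: (mxtens_indexP y) => r2 r3.
case: (mxtens_indexP c) => x c2; case: (mxtens_indexP x) => c1 c3.
by rewrite /f132 /f132V !mxtens_indexK /= !tensmxE mulrA mulrAC.
Qed.

Lemma PP2 n p q h :
  assocmx K n p (q * h) *m ((1%:M : 'M[K]_n) *t perm132mx K p q h)
  = Qmx K n p q h *m assocmx K n (p * h) q.
Proof.
rewrite !assocE p132E tens1pmx /Qmx !pmx_comp; apply: pmx_ext => r.
case: (mxtens_indexP r) => x y; case: (mxtens_indexP x) => r1 r2; case: (mxtens_indexP y) => r3 r4.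
by rewrite /fa /fQ /f132 !mxtens_indexK.
Qed.

Lemma PP1 n p q h :
  (perm132mx K n p h *t ((1%:M : 'M[K]_q) *t (1%:M : 'M[K]_h))) *m Qmx K (n * h) p q h
  = Qmx K n (p * h) q h *m (((1%:M : 'M[K]_n) *t swap23mx K p h h) *t (1%:M : 'M[K]_q))
    *m (perm132mx K n (p * h) h *t (1%:M : 'M[K]_q)).
Proof.
rewrite -!pmx_id !p132E swE /Qmx !tenspmx !pmx_comp; apply: pmx_ext => r.
case: (mxtens_indexP r) => x y; case: (mxtens_indexP x) => r1 z; case: (mxtens_indexP z) => r2 r3.
case: (mxtens_indexP y) => r4 r5.
by rewrite /fQ /f132 /fsw !mxtens_indexK.
Qed.

End Nat.


Section Main.
Variable K : fieldType.
Local Notation I k := (1%:M : 'M[K]_k).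

Lemma tensinv n p (B1 : 'M[K]_n) (B2 : 'M[K]_p) : B1 \in unitmx -> B2 \in unitmx ->
  (B1 *t B2) *m (invmx B1 *t invmx B2) = 1%:M /\ (invmx B1 *t invmx B2) *m (B1 *t B2) = 1%:M.
Proof. by move=> u1 u2; rewrite !tensmx_mul !mulmxV // !mulVmx // tens11. Qed.

Lemma IR n p q (A : 'M[K]_n) (B1 : 'M[K]_p) (B2 : 'M[K]_q) (X : 'M[K]_(n, p * q)) :
  A \in unitmx -> B1 \in unitmx -> B2 \in unitmx -> A *m X = X *m (B1 *t B2) ->
  forall k, mxpowz A k *m X = X *m (mxpowz B1 k *t mxpowz B2 k).
Proof.
move=> uA u1 u2 E.
have Ei : invmx A *m X = X *m (invmx B1 *t invmx B2).
  have [e1 _] := tensinv u1 u2.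
  by rewrite -[LHS]mulmx1 -e1 !mulmxA -[invmx A *m X *m _]mulmxA -E mulmxA mulVmx // mul1mx.
elim/int_rec=> [|k IH|k IH].
- by rewrite !pow0 mul1mx tens11 mulmx1.
- have -> : (Posz k.+1 = Posz k + 1)%R by lia.
  by rewrite !powS // -mulmxA E mulmxA IH -mulmxA tensmx_mul.
- rewrite !powN // -mulmxA Ei mulmxA IH -mulmxA tensmx_mul.
  by [].
Qed.

Lemma IL n p q (A : 'M[K]_n) (B1 : 'M[K]_p) (B2 : 'M[K]_q) (X : 'M[K]_(p * q, n)) :
  A \in unitmx -> B1 \in unitmx -> B2 \in unitmx -> (B1 *t B2) *m X = X *m A ->
  forall k, (mxpowz B1 k *t mxpowz B2 k) *m X = X *m mxpowz A k.
Proof.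
move=> uA u1 u2 E.
have Ei : (invmx B1 *t invmx B2) *m X = X *m invmx A.
  have [_ e2] := tensinv u1 u2.
  by rewrite -[LHS]mulmx1 -(mulmxV uA) !mulmxA -[_ *m X *m A]mulmxA -E mulmxA e2 mul1mx.
elim/int_rec=> [|k IH|k IH].
- by rewrite !pow0 mulmx1 tens11 mul1mx.
- have -> : (Posz k.+1 = Posz k + 1)%R by lia.
  by rewrite !powS // -tensmx_mul -mulmxA E [LHS]mulmxA IH -mulmxA.
- by rewrite !powN // -tensmx_mul -mulmxA Ei [LHS]mulmxA IH -mulmxA.
Qed.

End Main.


Section Comm.
Variable K : fieldType.
Local Notation I k := (1%:M : 'M[K]_k).

Lemma commute_main n p q h (r : 'M[K]_(p, p * h)) (s : 'M[K]_(q, q * h))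
  (x : 'M[K]_(n * h, n)) (y : 'M[K]_(p * h, p)) :
  y *m r = (r *t I h) *m swap23mx K p h h *m (y *t I h) ->
  (((I n *t I p) *t s) *m Qmx K n p q h *m ((I n *t y) *t I q)) *m
  (((I n *t r) *t I q) *m (perm132mx K n p h *t I q) *m ((x *t I p) *t I q))
  = (((I n *t r) *t I q) *m (perm132mx K n p h *t I q) *m ((x *t I p) *t I q)) *m
  (((I n *t I p) *t s) *m Qmx K n p q h *m ((I n *t y) *t I q)).
Proof.
move=> Hy.
pose N := ((I n *t r) *t s) *m ((perm132mx K n p h *t (I q *t I h)) *m
          (Qmx K (n * h) p q h *m ((x *t y) *t I q))).
transitivity N; last first.
  rewrite -!mulmxA.
  have f1 : forall k (Z : 'M[K]_(n * p * (q * h), k)),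
     ((x *t I p) *t I q) *m (((I n *t I p) *t s) *m Z)
     = ((I (n * h) *t I p) *t s) *m (((x *t I p) *t (I q *t I h)) *m Z).
    move=> k Z; rewrite !mulmxA !tensmx_mul !mulmx1 !mul1mx.
    by rewrite tens11 mulmx1.
  have f2 : forall k (Z : 'M[K]_(n * (p * h) * q, k)),
     ((x *t I p) *t (I q *t I h)) *m (Qmx K n p q h *m Z)
     = Qmx K (n * h) p q h *m (((x *t (I p *t I h)) *t I q) *m Z).
    by move=> k Z; rewrite !mulmxA N3.
  have f3 : ((x *t (I p *t I h)) *t I q) *m ((I n *t y) *t I q) = (x *t y) *t I q.
    by rewrite !tensmx_mul !mulmx1 tens11 mul1mx.
  have f4 : forall k (Z : 'M[K]_(n * h * p * (q * h), k)),
     ((I n *t r) *t I q) *m ((perm132mx K n p h *t I q) *m (((I (n * h) *t I p) *t s) *m Z))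
     = ((I n *t r) *t s) *m ((perm132mx K n p h *t (I q *t I h)) *m Z).
    move=> k Z; rewrite !mulmxA !tensmx_mul !mulmx1 !mul1mx !tens11.
    by rewrite !mulmx1.
  by rewrite f1 f2 f3 f4.
rewrite -!mulmxA.
have e1 : forall k (Z : 'M[K]_(n * (p * h) * q, k)),
   ((I n *t y) *t I q) *m (((I n *t r) *t I q) *m Z)
   = ((I n *t (r *t I h)) *t I q) *m (((I n *t swap23mx K p h h) *t I q) *m
       (((I n *t (y *t I h)) *t I q) *m Z)).
  by move=> k Z; rewrite !mulmxA !tensmx_mul !mulmx1 Hy.
have e2 : forall k (Z : 'M[K]_(n * (p * h * h) * q, k)),
   Qmx K n p q h *m (((I n *t (r *t I h)) *t I q) *m Z)
   = ((I n *t r) *t (I q *t I h)) *m (Qmx K n (p * h) q h *m Z).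
  by move=> k Z; rewrite !mulmxA N3.
have e3 : ((I n *t (y *t I h)) *t I q) *m ((perm132mx K n p h *t I q) *m ((x *t I p) *t I q))
   = (perm132mx K n (p * h) h *t I q) *m ((x *t y) *t I q).
  rewrite !mulmxA !tensmx_mul !mulmx1 N4 -mulmxA tensmx_mul tens11 mul1mx mulmx1.
  by [].
have e4 : forall k (Z : 'M[K]_(n * (p * h) * (q * h), k)),
   ((I n *t I p) *t s) *m (((I n *t r) *t (I q *t I h)) *m Z)
   = ((I n *t r) *t s) *m Z.
  by move=> k Z; rewrite mulmxA !tensmx_mul !mul1mx tens11 mulmx1.
rewrite e1 e3 e2 e4 /N; congr (_ *m _).
by rewrite !mulmxA -PP1.
Qed.

End Comm.


Section Forms.
Variable K : fieldType.
Local Notation I k := (1%:M : 'M[K]_k).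
Local Notation T := mxpowz.

Lemma Hylem p h (aV : 'M[K]_p) (aH : 'M[K]_h) (rho : 'M[K]_(p, p * h))
  (act : 'M[K]_(p * h, p)) (b : int) :
  aV \in unitmx -> aH \in unitmx ->
  aV *m rho = rho *m (aV *t aH) -> (aV *t aH) *m act = act *m aV ->
  act *m rho = (rho *t aH) *m swap23mx K p h h *m (act *t aH) ->
  ((T aV (-1) *t T aH b) *m act) *m (rho *m (T aV (-1) *t I h))
  = ((rho *m (T aV (-1) *t I h)) *t I h) *m swap23mx K p h h
    *m (((T aV (-1) *t T aH b) *m act) *t I h).
Proof.
move=> uV uH Erho Eact Long.
have R1 : T aV (-1) *m rho = rho *m (T aV (-1) *t T aH (-1)) := IR uV uV uH Erho (-1).
have A1 : act *m T aV (-1) = (T aV (-1) *t T aH (-1)) *m act := esym (IL uV uV uH Eact (-1)).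
have HH1 : T aH (-1) *m aH = I h by rewrite -{2}(pow1 aH) powD.
have HH2 : T aH b *m aH *m T aH (-1) = T aH b.
  by rewrite -{2}(pow1 aH) !powD // -addrA addrN addr0.
move: R1 A1 HH1 HH2; move: (T aV (-1)) (T aH b) (T aH (-1)) => TV Tb Tm R1 A1 HH1 HH2.
transitivity ((rho *t I h) *m (swap23mx K p h h *m
   (((TV *t (Tb *m aH)) *m act *m TV) *t (Tm *m aH)))).
  rewrite mulmxA -[_ *m act *m _]mulmxA Long.
  rewrite !mulmxA.
  have -> : (TV *t Tb) *m (rho *t aH)
            = (rho *t I h) *m ((TV *t Tm) *t (Tb *m aH)).
    by rewrite !tensmx_mul R1 mul1mx.
  rewrite -!mulmxA; congr (_ *m _); rewrite mulmxA N2 -mulmxA; congr (_ *m _).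
  by rewrite !tensmx_mul mulmx1 !mulmxA.
rewrite HH1 -(mulmxA _ act) A1 [_ *m (_ *m act)]mulmxA tensmx_mul HH2.
have -> : ((rho *m (TV *t I h)) *t I h) = (rho *t I h) *m ((TV *t I h) *t I h).
  by rewrite tensmx_mul mulmx1.
rewrite -!mulmxA; congr (_ *m _).
rewrite [RHS]mulmxA N2 -mulmxA; congr (_ *m _).
by rewrite tensmx_mul mulmx1 mulmxA tensmx_mul mul1mx.
Qed.


End Forms.


Section Forms2.
Variable K : fieldType.
Local Notation I k := (1%:M : 'M[K]_k).
Local Notation T := mxpowz.

Lemma Bform n p h q (rho : 'M[K]_(p, p * h)) (TV : 'M[K]_p) (x : 'M[K]_(n * h, n)) :
  ((I n *t rho) *m perm132mx K n p h *m (x *t TV)) *t I q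
  = ((I n *t (rho *m (TV *t I h))) *t I q) *m (perm132mx K n p h *t I q) *m ((x *t I p) *t I q).
Proof.
rewrite !tensmx_mul !mulmx1; congr (_ *t _).
have -> : I n *t (rho *m (TV *t I h)) = (I n *t rho) *m (I n *t (TV *t I h)).
  by rewrite tensmx_mul mulmx1.
rewrite -!mulmxA; congr (_ *m _); rewrite mulmxA N4 -mulmxA tensmx_mul tens11 mul1mx.
by rewrite mulmx1.
Qed.

Lemma N1' n1 m1 p1 n2 m2 p2 k (A : 'M[K]_(n1, n2)) (B : 'M[K]_(m1, m2)) (C : 'M[K]_(p1, p2))
  (Z : 'M[K]_(n2 * (m2 * p2), k)) :
  assocmx K n1 m1 p1 *m ((A *t (B *t C)) *m Z) = ((A *t B) *t C) *m (assocmx K n2 m2 p2 *m Z).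
Proof. by rewrite mulmxA N1 -mulmxA. Qed.

Lemma PP2' n p q h k (Z : 'M[K]_(n * (p * h * q), k)) :
  assocmx K n p (q * h) *m (((1%:M : 'M[K]_n) *t perm132mx K p q h) *m Z)
  = Qmx K n p q h *m (assocmx K n (p * h) q *m Z).
Proof. by rewrite [LHS]mulmxA PP2 -mulmxA. Qed.
Lemma assocK' n m p k (Z : 'M[K]_(n * m * p, k)) :
  assocmx K n m p *m (assocmxV K n m p *m Z) = Z.
Proof. by rewrite mulmxA assocK mul1mx. Qed.

Lemma Aform n p q h (i j : int) (aU : 'M[K]_n) (aV : 'M[K]_p) (aW : 'M[K]_q) (aH : 'M[K]_h)
  (rhoW : 'M[K]_(q, q * h)) (XV : 'M[K]_(p * h, p)) :
  aU \in unitmx -> aW \in unitmx -> aH \in unitmx -> aW *m rhoW = rhoW *m (aW *t aH) ->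
  assoc_ij i j aU aV aW *m (I n *t ((I p *t rhoW) *m perm132mx K p q h *m (XV *t T aW (-1))))
    *m assoc_ijV i j aU aV aW
  = ((I n *t I p) *t (rhoW *m (T aW (-1) *t I h))) *m Qmx K n p q h
    *m ((I n *t ((I p *t T aH (- j - 1)) *m XV)) *t I q).
Proof.
move=> uU uW uH ER.
have R : T aW (- j - 1) *m rhoW = rhoW *m (T aW (- j - 1) *t T aH (- j - 1)) := IR uW uW uH ER _.
have PU : T aU (i + 1) *m T aU (- i - 1) = I n.
  by rewrite powD //; have -> : (i + 1 + (- i - 1) = 0)%R by lia.
have PW : T aW (- j - 1) *m T aW (-1) *m T aW (j + 1) = T aW (-1).
  by rewrite !powD //; congr mxpowz; lia.
rewrite /assoc_ij /assoc_ijV.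
move: R PU PW; move: (T aU (i + 1)) (T aU (- i - 1)) (T aW (- j - 1)) (T aW (-1))
  (T aW (j + 1)) (T aH (- j - 1)) => TU TU' TW TW1 TW' TH R PU PW.
have E1 : I n *t ((I p *t rhoW) *m perm132mx K p q h *m (XV *t TW1))
   = (I n *t (I p *t rhoW)) *m ((I n *t perm132mx K p q h) *m (I n *t (XV *t TW1))).
  by rewrite !tensmx_mul !mulmx1 mulmxA.
rewrite E1 -!mulmxA N1' PP2' N1' assocK'.
have E2 : ((TU *t I p) *t TW) *m ((I n *t I p) *t rhoW)
   = ((I n *t I p) *t rhoW) *m ((TU *t I p) *t (TW *t TH)).
  by rewrite !tensmx_mul !mulmx1 !mul1mx R.
rewrite [LHS]mulmxA E2 -mulmxA [X in _ *m X]mulmxA N3 -mulmxA.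
have E3 : ((TU *t (I p *t TH)) *t TW) *m (((I n *t XV) *t TW1) *m ((TU' *t I p) *t TW'))
   = (I n *t ((I p *t TH) *m XV)) *t TW1.
  by rewrite !tensmx_mul !mulmx1 mul1mx PU mulmxA PW.
rewrite E3.
have E4 : (I n *t I p) *t (rhoW *m (TW1 *t I h))
   = ((I n *t I p) *t rhoW) *m ((I n *t I p) *t (TW1 *t I h)).
  by rewrite tensmx_mul tens11 mulmx1.
rewrite E4 -!mulmxA; congr (_ *m _); rewrite mulmxA N3 -mulmxA; congr (_ *m _).
by rewrite tensmx_mul !tens11 !mul1mx mulmx1.
Qed.

End Forms2.

Unset Implicit Arguments.


Theorem theorem6p4 (K : fieldType) (charK0 : [pchar K] =i pred0) (i j : int)
  (H : hom_bialg_data K) (HH : is_hom_bialgebra H) (m : int)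
  (U V W : hom_dimod_data H)
  (HU : is_hom_long_dimodule U) (HV : is_hom_long_dimodule V)
  (HW : is_hom_long_dimodule W) :
  let a := assoc_ij i j (ualpha U) (ualpha V) (ualpha W) in
  let ainv := assoc_ijV i j (ualpha U) (ualpha V) (ualpha W) in
  let idU := (1%:M : 'M[K]_(udim U)) in
  let idW := (1%:M : 'M[K]_(udim W)) in
  a *m (idU *t xi m V W) *m ainv *m (xi m U V *t idW)
  = (xi m U V *t idW) *m a *m (idU *t xi m V W) *m ainv.
Proof.
move=> a ainv idU idW.
case: HH => uH _ _.
case: HU => uU _ _.
case: HV => uV [EactV ErhoV _ _] [_ _ Long].
case: HW => uW [_ ErhoW _ _] _.
rewrite /a /ainv /idU /idW {a ainv idU idW}.
rewrite -[RHS]mulmxA -[RHS]mulmxA [X in _ = _ *m X]mulmxA.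
rewrite /xi (@Aform K _ _ _ _ i j _ (ualpha V) _ _ _ _ uU uW uH ErhoW) Bform.
have Ey : ((1%:M : 'M[K]_(udim V)) *t mxpowz (halpha H) (- j - 1)) *m
    ((mxpowz (ualpha V) (-1) *t mxpowz (halpha H) m) *m uact V)
  = (mxpowz (ualpha V) (-1) *t mxpowz (halpha H) (- j - 1 + m)) *m uact V.
  by rewrite mulmxA tensmx_mul mul1mx powD.
rewrite Ey; apply: commute_main; exact: Hylem.
Qed.
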